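(* Let $g:(0,\infty)\to(0,\infty)$ be a positive decreasing function with $\lim_{t\to+\infty}g(t)/g(2t)=2$ (respectively, $\lim_{t\to0+}g(t)/g(2t)=2$). Let $f\in L_\infty(0,\infty)$ be such that $\sup_{n\in\mathbb Z}\frac{1}{2^ng(2^n)}\left|\int_0^{2^n}f(s)\,ds\right|<\infty$. Then the sequence $$\left\{\frac{1}{2^ng(2^n)}\int_{2^n}^{2^{n+1}}f(s)\,ds\right\}_{n\in\mathbb Z}$$ belongs to $\mathrm{Range}(I-S_+)+c_0(\mathbb Z_+)$ (respectively, to $\mathrm{Range}(I-S_+)+c_0(\mathbb Z_-)$).
   Context: $\ell_\infty(\mathbb Z)$ is the space of bounded two-sided complex sequences, $(S_+x)_n=x_{n-1}$, and $\mathrm{Range}(I-S_+)=\{x-S_+x: x\in\ell_\infty(\mathbb Z)\}$. $c_0(\mathbb Z_+)$ denotes the set of $x\in\ell_\infty(\mathbb Z)$ with $x_n\to0$ as $n\to+\infty$, and $c_0(\mathbb Z_-)$ the set of $x\in\ell_\infty(\mathbb Z)$ with $x_n\to0$ as $n\to-\infty$. *)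

(* Defs.v *)
From HB Require Import structures.
From mathcomp Require Import all_boot all_order all_algebra.
From mathcomp Require Import all_classical all_reals all_analysis.
From mathcomp Require Import complex.
Set Implicit Arguments. Unset Strict Implicit. Unset Printing Implicit Defensive.
Import Order.TTheory GRing.Theory Num.Theory.
Import numFieldNormedType.Exports.
Local Open Scope classical_set_scope.
Local Open Scope ring_scope.

Section Defs.
Variable R : realType.
Local Notation C := (R[i]).

Definition linf (x : int -> C) : Prop := exists M : R, forall n, `|x n| <= M%:C%C.

Definition Splus (x : int -> C) : int -> C := fun n => x (n - 1).

Definition range_I_Splus (y : int -> C) : Prop :=
  exists x : int -> C, linf x /\ forall n, y n = x n - Splus x n.

Definition c0_plus (x : int -> C) : Prop :=
  linf x /\ forall e : R, 0 < e -> exists N : int, forall n, N <= n -> `|x n| < e%:C%C.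

Definition c0_minus (x : int -> C) : Prop :=
  linf x /\ forall e : R, 0 < e -> exists N : int, forall n, n <= N -> `|x n| < e%:C%C.

Definition Cint (f : R -> C) (a b : R) : C :=
  (\int[lebesgue_measure]_(s in `[a, b]) complex.Re (f s))%:C%C
  + 'i%C * (\int[lebesgue_measure]_(s in `[a, b]) complex.Im (f s))%:C%C.

Definition Linf_pos (f : R -> C) : Prop :=
  measurable_fun (`]0, +oo[ : set R) (fun s : R => complex.Re (f s)) /\
  measurable_fun (`]0, +oo[ : set R) (fun s : R => complex.Im (f s)) /\
  exists M : R, {ae lebesgue_measure, forall s, 0 < s -> `|f s| <= M%:C%C}.

End Defs.

(* Main.v *)
Require Import Defs.
From HB Require Import structures.
From mathcomp Require Import all_boot all_order all_algebra.
From mathcomp Require Import all_classical all_reals all_analysis.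
From mathcomp Require Import complex.
From mathcomp Require Import ring lra.
Import Order.TTheory GRing.Theory Num.Theory.
Import numFieldNormedType.Exports.
Local Open Scope classical_set_scope.
Local Open Scope ring_scope.

Section S.
Variable R : realType.
Notation mu := (@lebesgue_measure R).

Lemma int_ok (h : R -> R) (M c : R) : 0 <= c ->
  measurable_fun (`]0, +oo[ : set R) h ->
  {ae mu, forall s, 0 < s -> `|h s| <= M} ->
  mu.-integrable `[0, c] (EFin \o h).
Proof.
move=> c0 mh hM.
have mh' : measurable_fun `]0, c] h.
  apply: measurable_funS mh => //= x /=; rewrite !in_itv /= andbT => /andP[].
  by [].
have mhc : measurable_fun `[0, c] h by apply/measurable_realfun.measurable_fun_itv_obnd_cbndP.
apply/integrableP; split; first exact/measurable_realfun.measurable_EFinP.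
rewrite -integral_itv_obnd_cbnd /=; last first.
  by apply/measurable_realfun.measurable_EFinP; apply: measurableT_comp.
have H : (\int[mu]_(x in `]0%R, c]) `|h x|%:E <= \int[mu]_(x in `]0%R, c]) (`|M|)%:E)%E.
  apply: ae_ge0_le_integral => //.
  - by apply/measurable_realfun.measurable_EFinP; apply: measurableT_comp.
  - apply: (filterS _ hM); first exact: (ae_filter_ringOfSetsType mu).
    move=> x H; rewrite /= in_itv /= => /andP[x0 _].
    by rewrite lee_fin (le_trans (H x0)) // ler_norm.
apply: (le_lt_trans H).
rewrite integral_cst //= lebesgue_measure_itv /=.
by case: ifP => _; rewrite ?mule0 ?ltry // -EFinB -EFinM ltry.
Qed.

Lemma Rint_split (h : R -> R) (M c x : R) : 0 < x -> x <= c ->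
  measurable_fun (`]0, +oo[ : set R) h ->
  {ae mu, forall s, 0 < s -> `|h s| <= M} ->
  \int[mu]_(s in `[0, c]) h s = \int[mu]_(s in `[0, x]) h s + \int[mu]_(s in `[x, c]) h s.
Proof.
move=> x0 xc mh hM.
have ic := @int_ok h M c (le_trans (ltW x0) xc) mh hM.
have E := @Rintegral_itvB R h (BLeft 0) (BRight c) x ic.
rewrite -Rintegral_itv_obnd_cbnd; last first.
  apply: integrableS ic => //= y /=; rewrite !in_itv /= => /andP[xy ->].
  by rewrite (le_trans (ltW x0) (ltW xy)).
rewrite -E ?bnd_simp ?(ltW x0) //.
by rewrite addrC subrK.
Qed.

Lemma normRe (z : R[i]) (M : R) : `|z| <= M%:C%C -> `|complex.Re z| <= M.
Proof.
rewrite normc_def lecR; apply: le_trans; rewrite -sqrtr_sqr; apply: ler_wsqrtr.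
by rewrite lerDl sqr_ge0.
Qed.

Lemma normIm (z : R[i]) (M : R) : `|z| <= M%:C%C -> `|complex.Im z| <= M.
Proof.
rewrite normc_def lecR; apply: le_trans; rewrite -sqrtr_sqr; apply: ler_wsqrtr.
by rewrite lerDr sqr_ge0.
Qed.

Lemma Cint_split (f : R -> R[i]) c x : Linf_pos f -> 0 < x -> x <= c ->
  Cint f 0 c = Cint f 0 x + Cint f x c.
Proof.
move=> [mRe [mIm [M hM]]] x0 xc.
have hRe : {ae mu, forall s, 0 < s -> `|complex.Re (f s)| <= M}.
  apply: (filterS _ hM); first exact: (ae_filter_ringOfSetsType mu).
  by move=> s H s0; apply: normRe; apply: H.
have hIm : {ae mu, forall s, 0 < s -> `|complex.Im (f s)| <= M}.
  apply: (filterS _ hM); first exact: (ae_filter_ringOfSetsType mu).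
  by move=> s H s0; apply: normIm; apply: H.
rewrite /Cint (@Rint_split _ M c x x0 xc mRe hRe) (@Rint_split _ M c x x0 xc mIm hIm).
rewrite !rmorphD /=; ring.
Qed.

Lemma big2 (x : R) : exists k : nat, x < (2:R) ^+ k.
Proof.
have h := archi_boundP (normr_ge0 x).
exists (Num.Def.archi_bound `|x|).
apply: le_lt_trans (ler_norm x) _; apply: lt_le_trans h _.
by rewrite -natrX ler_nat ltnW // ltn_expl.
Qed.

Lemma normCR (k : R) : `|k%:C%C| = (`|k|)%:C%C.
Proof. by rewrite normc_def /= expr0n addr0 sqrtr_sqr. Qed.

Lemma rr_bounds (u v : R) : 0 < v -> v <= u ->
  `|2 * v / u - 1| <= 1 /\ `|2 * v / u - 1| <= `|2 - u / v|.
Proof.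
move=> v0 vu; have u0 : 0 < u by apply: lt_le_trans vu.
have -> : 2 * v / u - 1 = (2 * v - u) / u by field; rewrite gt_eqF.
have -> : 2 - u / v = (2 * v - u) / v by field; rewrite gt_eqF.
rewrite !normrM !normfV !(gtr0_norm u0) !(gtr0_norm v0); split.
  rewrite ler_pdivrMr // mul1r ler_norml; apply/andP; split; lra.
apply: ler_wpM2l; first exact: normr_ge0.
by rewrite lef_pV2 // posrE.
Qed.
End S.

Theorem lemma2p14 (R : realType) (g : R -> R) (f : R -> R[i]) :
  (forall t, 0 < t -> 0 < g t) ->
  (forall s t, 0 < s -> s <= t -> g t <= g s) ->
  Linf_pos f ->
  (exists K : R, forall n : int,
      `|Cint f 0 (2 ^ n)| / ((2 ^ n * g (2 ^ n))%:C%C) <= K%:C%C) ->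
  let a := fun n : int =>
    Cint f (2 ^ n) (2 ^ (n + 1)) / ((2 ^ n * g (2 ^ n))%:C%C) in
  (((fun t : R => g t / g (2 * t)) @ +oo --> (2 : R)) ->
     exists y z, range_I_Splus y /\ c0_plus z /\ a = y \+ z) /\
  (((fun t : R => g t / g (2 * t)) @ (0 : R)^'+ --> (2 : R)) ->
     exists y z, range_I_Splus y /\ c0_minus z /\ a = y \+ z).
Proof.
move=> gpos gdec hf [K hK] a.
pose p (n : int) : R := 2 ^ n.
have p0 n : 0 < p n by apply: exprz_gt0.
have pS n : p (n + 1) = 2 * p n.
  by rewrite /p expfzDr // mulrC.
pose G n := p n * g (p n).
have G0 n : 0 < G n by apply: mulr_gt0 => //; apply: gpos.
pose c n := (G n)%:C%C.
have c0 n : c n != 0.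
  by apply/negP => /eqP/(congr1 (@complex.Re R)) /= E; move: (G0 n); rewrite E ltxx.
pose F n := Cint f 0 (p n).
pose b n := F n / c n.
have hb n : `|b n| <= K%:C%C.
  by rewrite /b normrM normfV /c normCR (gtr0_norm (G0 n)); exact: hK.
have K0 : 0 <= K by rewrite -ler0c; exact: le_trans (normr_ge0 _) (hb 0).
have aE n : a n = (F (n + 1) - F n) / c n.
  have -> : a n = Cint f (p n) (p (n + 1)) / c n by [].
  have E := @Cint_split R f (p (n + 1)) (p n) hf (p0 n).
  rewrite /F E ?pS; last by rewrite ler_peMl // ?ler1n // ltW.
  by rewrite addrC addKr.
pose rr n := G (n + 1) / G n.
have rrE n : c (n + 1) / c n = (rr n)%:C%C.
  by rewrite /c /rr [RHS]rmorphM [X in _ = _ * X]fmorphV.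
have zE n : a n - (b (n + 1) - b n) = b (n + 1) * ((rr n)%:C%C - 1).
  rewrite aE -rrE /b; field.
  by rewrite !c0.
have rrq n : rr n = 2 * g (2 * p n) / g (p n).
  rewrite /rr /G pS; field.
  by rewrite !gt_eqF ?p0 ?gpos ?mulr_gt0.
have rrb n : `|rr n - 1| <= 1 /\ `|rr n - 1| <= `|2 - g (p n) / g (2 * p n)|.
  rewrite rrq; apply: rr_bounds; first by apply: gpos; rewrite mulr_gt0.
  by apply: gdec; rewrite ?p0 // ler_peMl // ?ler1n // ltW.
have normz n : `|a n - (b (n + 1) - b n)| <= K%:C%C * (`|rr n - 1|)%:C%C.
  rewrite zE normrM -(rmorph1 (real_complex R)) -rmorphB normCR.
  by apply: ler_pM => //; rewrite ler0c.
pose y n := b (n + 1) - b n.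
pose z n := a n - y n.
have rangey : range_I_Splus y.
  exists (fun n => b (n + 1)); split; first by exists K.
  by move=> n; rewrite /Splus subrK.
have aeq : a = y \+ z by apply: funext => n /=; rewrite /z addrC subrK.
have linfz : linf z.
  exists K => n; apply: le_trans (normz n) _.
  by rewrite -rmorphM lecR ler_piMr // (proj1 (rrb n)).
have key e n : 0 < e -> `|2 - g (p n) / g (2 * p n)| < e / (K + 1) -> `|z n| < e%:C%C.
  move=> e0 hq; apply: le_lt_trans (normz n) _.
  rewrite -rmorphM ltcR.
  have hx : `|rr n - 1| < e / (K + 1) by apply: le_lt_trans (proj2 (rrb n)) hq.
  move: hx; rewrite ltr_pdivlMr ?ltr_wpDl //.
  have := normr_ge0 (rr n - 1); nra.
have d0 e : 0 < e -> 0 < e / (K + 1) by move=> e0; rewrite divr_gt0 // ltr_wpDl.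
split.
  move=> H; exists y, z; split => //; split => //; split => // e e0.
  have [M [_ HM]] := cvgr_dist_lt _ _ H _ (d0 e e0).
  have [k Hk] := @big2 R M.
  exists k%:Z => n Nn; apply: key => //; apply: HM.
  apply: (lt_le_trans Hk); rewrite exprnP /p; by apply: ler_weXz2l => //; rewrite ler1n.
move=> H; exists y, z; split => //; split => //; split => // e e0.
have [d /= d0' Hd] := cvgr_dist_lt _ _ H _ (d0 e e0).
have [k Hk] := @big2 R (d^-1).
exists (- k%:Z) => n nN; apply: key => //; apply: Hd; last exact: p0.
rewrite /ball_ /= sub0r normrN gtr0_norm //; apply: le_lt_trans (ler_weXz2l _ nN) _; first by rewrite ler1n.
rewrite -invr_expz -exprnP -[d]invrK ltf_pV2 ?posrE ?exprn_gt0 ?invr_gt0 //.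
Qed.
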